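(* Consider the repeated single-slot hybrid auction in which at each step $t$ each advertiser $j$ bids $(m_{jt},c_{jt})$, the auctioneer's index is $q_{jt}$, the effective bid is $R_{jt}=\max(m_{jt},c_{jt}q_{jt})$, the highest effective bid wins and pays (with $R_{-j}$ the highest competing effective bid) $R_{-j}$ per impression if $m_{jt}>c_{jt}q_{jt}$ and $R_{-j}/q_{jt}$ per click otherwise. Advertiser $j$ has per-click value $v_j$, and the advertiser and auctioneer share the same Bayes-updated prior $\mathcal{P}_{jt}=\mathcal{Q}_{jt}$ on $j$'s click-through rate, with mean $p_{jt}$; the auctioneer's index $q_{jt}$ is the Gittins index of $\mathcal{Q}_{jt}$ with discount factor $\gamma_a$. Each advertiser uses the bidding index strategy with discount factor $\gamma_b$: at each step it bids $(B_{jt},B_{jt}/p_{jt})$, where $B_{jt}=\mathcal{W}_{jt}\min(1,p_{jt}/q_{jt})$ and $\mathcal{W}_{jt}$ is the largest $W$ such that the following game has positive optimal expected $\gamma_b$-discounted value: starting from the current priors, at each step the advertiser may stop or continue, and if it continues it gains $v_jp_s-W\min(1,p_s/q_s)$ in expectation (with $p_s,q_s$ the current mean and auctioneer index), after which both priors are Bayes-updated with the click outcome. Let $\gamma\in[0,1)$ be a global discount factor, let $G_{jt}$ denote the Gittins index of $\mathcal{P}_{jt}$ with discount factor $\gamma$, and call socially optimal the allocation rule maximizing the infinite-horizon expected $\gamma$-discounted sum of $v_jp_{jt}$ over the advertisers $j$ receiving the impression at each step $t$, which gives the impression at each step to an advertiser with the highest $v_jG_{jt}$. Then the bidding index strategy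 implements the socially optimal solution (each advertiser's effective bid equals $v_jG_{jt}$) in each of the following two cases: (1) $\gamma_b=\gamma$ and $\gamma_a=0$; (2) $\gamma_b=0$ and $\gamma_a=\gamma$.
   Context: Gittins index of a prior $\mathcal{Q}$ with discount factor $\gamma$: for a coin whose head probability has prior $\mathcal{Q}$ (Bayes-updated after each toss), yielding reward $1$ on heads and charged $G$ per toss, with the option to retire at any time, it is the largest $G$ for which the optimal expected $\gamma$-discounted difference between rewards and charges is non-negative. It equals the mean when $\gamma=0$ and is at least the mean in general. *)

(* Defs.v *)
From HB Require Import structures.
From mathcomp Require Import all_boot all_order all_algebra.
From mathcomp Require Import all_classical all_reals all_analysis.
Set Implicit Arguments. Unset Strict Implicit. Unset Printing Implicit Defensive.
Import Order.TTheory GRing.Theory Num.Theory.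
Import numFieldNormedType.Exports.
Local Open Scope classical_set_scope.
Local Open Scope ring_scope.

Section Bayes.
Context {R : realType}.

(* A prior on a click-through rate: a probability measure on the reals
   (Borel) giving full mass to [0,1].  The posterior after observing
   k clicks and m non-clicks is the measure x^k (1-x)^m dP, normalised.
   We represent the Bayes-updated prior by the pair of counts (k, m). *)

Definition mom (P : probability R R) (k m : nat) : R :=
  fine (\int[P]_(x in `[0, 1]) ((x ^+ k * (1 - x) ^+ m)%:E)).

Definition pmean (P : probability R R) (k m : nat) : R :=
  mom P k.+1 m / mom P k m.

(* A (history-dependent) stopping rule: given the (reversed) list of
   outcomes observed so far (true = click), decide whether to stop. *)
Definition stop_rule := seq bool -> bool.

Fixpoint trunc_value (P : probability R R) (g : R) (r : nat -> nat -> R)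
   (sigma : stop_rule) (k0 m0 : nat) (n : nat) (h : seq bool) : R :=
  match n with
  | 0 => 0
  | n'.+1 =>
    let k := (k0 + count id h)%N in
    let m := (m0 + count negb h)%N in
    if sigma h then 0 else
    r k m + g * (pmean P k m * trunc_value P g r sigma k0 m0 n' (true :: h)
               + (1 - pmean P k m) * trunc_value P g r sigma k0 m0 n' (false :: h))
  end.

Definition rule_value P g r sigma k0 m0 : R :=
  limn (fun n => trunc_value P g r sigma k0 m0 n [::]).

Definition opt_value P g r k0 m0 : R :=
  sup [set rule_value P g r sigma k0 m0 | sigma in [set: stop_rule]].

Definition opt_value_play P g r k0 m0 : R :=
  sup [set rule_value P g r sigma k0 m0 | sigma in [set s : stop_rule | s [::] = false]].

Definition gittins P g k m : R :=
  sup [set G : R | 0 <= opt_value_play P g (fun k' m' => pmean P k' m' - G) k m].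

Definition bid_index P (v gb ga : R) k m : R :=
  sup [set W : R | 0 < opt_value P gb
        (fun k' m' => v * pmean P k' m'
            - W * Num.min 1 (pmean P k' m' / gittins P ga k' m')) k m].

Definition bid_impr P v gb ga k m : R :=
  bid_index P v gb ga k m * Num.min 1 (pmean P k m / gittins P ga k m).
Definition bid_click P v gb ga k m : R := bid_impr P v gb ga k m / pmean P k m.

Definition eff_bid P v gb ga k m : R :=
  Num.max (bid_impr P v gb ga k m) (bid_click P v gb ga k m * gittins P ga k m).

End Bayes.

(* Main.v *)
Require Import Defs.
From HB Require Import structures.
From mathcomp Require Import all_boot all_order all_algebra.
From mathcomp Require Import all_classical all_reals all_analysis.
From mathcomp Require Import measurable_realfun.
From mathcomp Require Import ring lra.
Import Order.TTheory GRing.Theory Num.Theory.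
Import numFieldNormedType.Exports.
Local Open Scope classical_set_scope.
Local Open Scope ring_scope.

Section Mom.
Context {R : realType} (P : probability R R).

Lemma mpoly_meas k m : measurable_fun (`[0%R, 1%R] : set R) (EFin \o (fun x : R => (x ^+ k * (1 - x) ^+ m))).
Proof.
apply/measurable_EFinP; apply: measurable_funM; apply: measurable_funX => //.
by apply: measurable_funB.
Qed.

Lemma int_bnd k m : (0 <= \int[P]_(x in (`[0%R, 1%R] : set R)) ((x ^+ k * (1 - x) ^+ m)%:E) <= 1%E)%E.
Proof.
apply/andP; split.
  apply: integral_ge0 => x /=; rewrite in_itv /= => /andP[x0 x1].
  by rewrite lee_fin mulr_ge0 // exprn_ge0 // subr_ge0.
apply: (@le_trans _ _ (\int[P]_(x in (`[0%R, 1%R] : set R)) (cst (EFin 1%R)) x)%E).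
  apply: ge0_le_integral => //.
  - move=> x /=; rewrite in_itv /= => /andP[x0 x1].
    by rewrite lee_fin mulr_ge0 // exprn_ge0 // subr_ge0.
  - exact: mpoly_meas.
  - move=> x /=; rewrite in_itv /= => /andP[x0 x1].
    rewrite lee_fin mulr_ile1 // ?exprn_ge0 ?subr_ge0 // ?exprn_ile1 // ?subr_ge0 //.
    by rewrite lerBlDr lerDl.
rewrite integral_cst // mul1e; exact: probability_le1.
Qed.

Lemma int_fin k m : (\int[P]_(x in (`[0%R, 1%R] : set R)) ((x ^+ k * (1 - x) ^+ m)%:E) \is a fin_num)%E.
Proof.
have /andP[h0 h1] := int_bnd k m.
by rewrite ge0_fin_numE // (le_lt_trans h1) // ltry.
Qed.

Lemma mom_ge0 k m : 0 <= mom P k m.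
Proof. by rewrite /mom fine_ge0 //; case/andP: (int_bnd k m). Qed.

Lemma mom_mono k m k' m' :
  (forall x : R, 0 <= x <= 1 -> x ^+ k' * (1 - x) ^+ m' <= x ^+ k * (1 - x) ^+ m) ->
  mom P k' m' <= mom P k m.
Proof.
move=> H; rewrite /mom; apply: fine_le; rewrite ?int_fin //.
apply: ge0_le_integral => //.
- move=> x /=; rewrite in_itv /= => /andP[x0 x1].
  by rewrite lee_fin mulr_ge0 // exprn_ge0 // subr_ge0.
- exact: mpoly_meas.
- exact: mpoly_meas.
Qed.

Lemma momSk k m : mom P k.+1 m <= mom P k m.
Proof.
apply: mom_mono => x /andP[x0 x1].
rewrite exprS -mulrA ler_piMl // mulr_ge0 // exprn_ge0 // subr_ge0 //.
Qed.

Lemma momSm k m : mom P k m.+1 <= mom P k m.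
Proof.
apply: mom_mono => x /andP[x0 x1].
rewrite exprS mulrCA ler_piMl // ?mulr_ge0 ?exprn_ge0 ?subr_ge0 //.
by rewrite lerBlDr lerDl.
Qed.

Lemma pmean_ge0 k m : 0 <= pmean P k m.
Proof. by rewrite /pmean divr_ge0 // mom_ge0. Qed.

Lemma pmean_le1 k m : pmean P k m <= 1.
Proof.
rewrite /pmean; have [->|h] := eqVneq (mom P k m) 0; first by rewrite invr0 mulr0.
have hp : 0 < mom P k m by rewrite lt_neqAle eq_sym h mom_ge0.
by rewrite ler_pdivrMr // mul1r momSk.
Qed.

Lemma pmean0S k m : pmean P k m = 0 -> pmean P k m.+1 = 0.
Proof.
rewrite /pmean => /eqP; rewrite mulf_eq0 invr_eq0 => h.
have e : mom P k.+1 m = 0.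
  case/orP: h => /eqP // h; apply/eqP; rewrite eq_le mom_ge0 andbT -h; exact: momSk.
have : mom P k.+1 m.+1 = 0.
  by apply/eqP; rewrite eq_le mom_ge0 andbT -e; exact: momSm.
by move=> ->; rewrite mul0r.
Qed.
End Mom.

Section Sup.
Context {R : realType}.

Lemma sup_max (S : set R) x : S x -> ubound S x -> sup S = x.
Proof.
move=> Sx ub; apply/le_anti/andP; split; first by apply: ge_sup => //; exists x.
by apply: ub_le_sup => //; exists x.
Qed.

Lemma sup_thr (S : set R) x : (forall W, W < x -> S W) -> ubound S x -> sup S = x.
Proof.
move=> hS ub; apply/le_anti/andP; split.
  by apply: ge_sup => //; exists (x - 1); apply: hS; rewrite ltrBlDr ltrDl.
rewrite leNgt; apply/negP => hlt.
have [h1 h2] := midf_lt hlt.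
have : (sup S + x) / 2 <= sup S by apply: ub_le_sup; [exists x | exact: hS].
by rewrite leNgt h1.
Qed.

Lemma rv_g0 (P : probability R R) r s k m :
  rule_value P 0 r s k m = if s [::] then 0 else r k m.
Proof.
rewrite /rule_value; apply: lim_near_cst; first exact: Rhausdorff.
exists 1%N => // -[//|n] _ /=.
by case: (s [::]) => //; rewrite mul0r addr0 !addn0.
Qed.

Lemma optv_g0 (P : probability R R) r k m : opt_value P 0 r k m = Num.max 0 (r k m).
Proof.
apply: sup_max.
  rewrite /Num.max; case: ifP => _.
    by exists (fun=> false) => //; rewrite rv_g0.
  by exists (fun=> true) => //; rewrite rv_g0.
move=> _ [s _ <-]; rewrite rv_g0; case: (s [::]).
  by rewrite le_max lexx.
by rewrite le_max lexx orbT.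
Qed.

Lemma optp_g0 (P : probability R R) r k m : opt_value_play P 0 r k m = r k m.
Proof.
apply: sup_max.
  by exists (fun=> false) => //; rewrite rv_g0.
by move=> _ [s /= hs <-]; rewrite rv_g0 hs.
Qed.

Lemma git_g0 (P : probability R R) k m : gittins P 0 k m = pmean P k m.
Proof.
apply: sup_max; first by rewrite /= optp_g0 subrr.
by move=> G /=; rewrite optp_g0 subr_ge0.
Qed.

End Sup.

Section Game.
Context {R : realType} (P : probability R R) (g : R) (g0 : 0 <= g) (g1 : g < 1)
  (pm0 : forall k m, 0 <= pmean P k m) (pm1 : forall k m, pmean P k m <= 1).
Implicit Types (r : nat -> nat -> R) (s : stop_rule).

Lemma tvS r s k0 m0 n h : trunc_value P g r s k0 m0 n.+1 h =
  if s h then 0 else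
  r (k0 + count id h)%N (m0 + count negb h)%N +
  g * (pmean P (k0 + count id h)%N (m0 + count negb h)%N * trunc_value P g r s k0 m0 n (true :: h)
     + (1 - pmean P (k0 + count id h)%N (m0 + count negb h)%N) * trunc_value P g r s k0 m0 n (false :: h)).
Proof. by []. Qed.

Lemma comb_le {a X Y X' Y' : R} : 0 <= a <= 1 -> X <= X' -> Y <= Y' ->
  a * X + (1 - a) * Y <= a * X' + (1 - a) * Y'.
Proof.
move=> /andP[a0 a1] hX hY; apply: lerD; apply: ler_wpM2l => //.
by rewrite subr_ge0.
Qed.

Lemma pmI k m : 0 <= pmean P k m <= 1.
Proof. by rewrite pm0 pm1. Qed.

Lemma tv_ub r s k0 m0 (C : R) : 0 <= C -> (forall k m, r k m + g * C <= C) ->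
  forall n h, trunc_value P g r s k0 m0 n h <= C.
Proof.
move=> C0 hr; elim=> [|n IH] h //=.
case: (s h) => //.
apply: le_trans (hr (k0 + count id h)%N (m0 + count negb h)%N); apply: lerD => //.
apply: ler_wpM2l => //.
have := comb_le (pmI (k0 + count id h)%N (m0 + count negb h)%N) (IH (true :: h)) (IH (false :: h)).
by move=> /le_trans; apply; rewrite -mulrDl addrC subrK mul1r.
Qed.

Lemma tv_lb r s k0 m0 (C : R) : C <= 0 -> (forall k m, C <= r k m + g * C) ->
  forall n h, C <= trunc_value P g r s k0 m0 n h.
Proof.
move=> C0 hr; elim=> [|n IH] h //=.
case: (s h) => //.
apply: le_trans (hr (k0 + count id h)%N (m0 + count negb h)%N) _; apply: lerD => //.
apply: ler_wpM2l => //.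
have := comb_le (pmI (k0 + count id h)%N (m0 + count negb h)%N) (IH (true :: h)) (IH (false :: h)).
by apply: le_trans; rewrite -mulrDl addrC subrK mul1r.
Qed.

Lemma tv_mono r r' s k0 m0 : (forall k m, r k m <= r' k m) ->
  forall n h, trunc_value P g r s k0 m0 n h <= trunc_value P g r' s k0 m0 n h.
Proof.
move=> hr; elim=> [|n IH] h //=.
case: (s h) => //.
apply: lerD => //; apply: ler_wpM2l => //.
exact: comb_le (pmI _ _) (IH _) (IH _).
Qed.

Lemma tv_diff r s k0 m0 (B : R) : 0 <= B -> (forall k m, r k m <= B) ->
  forall n h, trunc_value P g r s k0 m0 n.+1 h - trunc_value P g r s k0 m0 n h <= B * g ^+ n.
Proof.
move=> B0 hr; elim=> [|n IH] h.
  rewrite /= expr0 mulr1 !mulr0 addr0 subr0; by case: (s h) => //; rewrite mulr0 addr0.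
rewrite tvS [X in _ - X]tvS; case: (s h); first by rewrite subrr mulr_ge0 // exprn_ge0.
set a := pmean P _ _; set x := r _ _.
set X' := trunc_value _ _ _ _ _ _ _ (true :: h).
set Y' := trunc_value _ _ _ _ _ _ _ (false :: h).
set X := trunc_value _ _ _ _ _ _ n (true :: h).
set Y := trunc_value _ _ _ _ _ _ n (false :: h).
have -> : x + g * (a * X' + (1 - a) * Y') - (x + g * (a * X + (1 - a) * Y)) =
  g * (a * (X' - X) + (1 - a) * (Y' - Y)) by ring.
rewrite exprS mulrCA; apply: ler_wpM2l => //.
have := comb_le (pmI (k0 + count id h)%N (m0 + count negb h)%N) (IH (true :: h)) (IH (false :: h)).
by move=> /le_trans; apply; rewrite -mulrDl addrC subrK mul1r.
Qed.


Definition bnd r := exists B, 0 <= B /\ forall k m, `|r k m| <= B.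

Lemma tv_cvg r s k0 m0 : bnd r -> cvgn (fun n => trunc_value P g r s k0 m0 n [::]).
Proof.
move=> [B [B0 hB]].
have g1' : 0 < 1 - g by rewrite subr_gt0.
set C := B / (1 - g).
have C0 : 0 <= C by rewrite divr_ge0 // ltW.
have CB : C * (1 - g) = B by rewrite /C mulfVK // gt_eqF.
set u := fun n => _.
pose w := fun n => u n + C * g ^+ n.
have wni : nonincreasing_seq w.
  apply/nonincreasing_seqP => n; rewrite /w.
  have := @tv_diff r s k0 m0 B B0 (fun k m => le_trans (ler_norm _) (hB k m)) n [::].
  rewrite -/(u n.+1) -/(u n) => hd.
  have e : C * g ^+ n.+1 + B * g ^+ n = C * g ^+ n by rewrite -CB exprS; ring.
  lra.
have wlb : has_lbound (range w).
  exists (- C) => _ [n _ <-]; rewrite /w.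
rewrite -[- C]addr0.   apply: lerD; last by rewrite mulr_ge0 // exprn_ge0.
  apply: (@tv_lb r s k0 m0 (- C)); first by rewrite oppr_le0.
  move=> k m.
  have hk : - B <= r k m by rewrite lerNl; apply: le_trans (hB k m); rewrite -normrN ler_norm.
  have e : g * C = C - B by rewrite -CB; ring.
  rewrite mulrN e; lra.
have -> : u = w - (fun n => C * g ^+ n).
  by apply/funext => n; rewrite /w /= addrK.
apply: is_cvgB; first exact: nonincreasing_is_cvgn.
apply: cvgP; apply: (@cvg_geometric _ C g).
by rewrite ger0_norm.
Qed.

Lemma lim_le_c (u : nat -> R) c : cvgn u -> (forall n, u n <= c) -> limn u <= c.
Proof. by move=> cu hu; apply: limr_le => //; apply: nearW. Qed.

Lemma lim_ge_c (u : nat -> R) c : cvgn u -> (forall n, c <= u n) -> c <= limn u.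
Proof. by move=> cu hu; apply: limr_ge => //; apply: nearW. Qed.


Notation tv r s k0 m0 := (trunc_value P g r s k0 m0).

Lemma rv_ub r s k0 m0 C : bnd r -> 0 <= C -> (forall k m, r k m + g * C <= C) ->
  rule_value P g r s k0 m0 <= C.
Proof. by move=> b C0 hC; apply: lim_le_c; [exact: tv_cvg | move=> n; exact: tv_ub]. Qed.

Lemma rv_lb r s k0 m0 C : bnd r -> C <= 0 -> (forall k m, C <= r k m + g * C) ->
  C <= rule_value P g r s k0 m0.
Proof. by move=> b C0 hC; apply: lim_ge_c; [exact: tv_cvg | move=> n; exact: tv_lb]. Qed.

Lemma rv_mono r r' s k0 m0 : bnd r -> bnd r' -> (forall k m, r k m <= r' k m) ->
  rule_value P g r s k0 m0 <= rule_value P g r' s k0 m0.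
Proof.
move=> b b' hr; apply: ler_lim; try exact: tv_cvg.
by apply: nearW => n; exact: tv_mono.
Qed.

Lemma rv_stop r s k0 m0 : s [::] = true -> rule_value P g r s k0 m0 = 0.
Proof.
move=> hs; rewrite /rule_value.
have -> : (fun n => tv r s k0 m0 n [::]) = fun=> 0.
  by apply/funext; case=> //= n; rewrite hs.
exact: lim_cst.
Qed.

Definition s1 : stop_rule := fun h => h != [::].

Lemma rv_s1 r k0 m0 : rule_value P g r s1 k0 m0 = r k0 m0.
Proof.
rewrite /rule_value; apply: lim_near_cst; first exact: Rhausdorff. exists 1%N => // n /=.
case: n => // n _ /=.
have z : forall b, tv r s1 k0 m0 n [:: b] = 0 by case: n => // n b.
by rewrite !z !mulr0 addr0 mulr0 addr0 !addn0.
Qed.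

Lemma rv_shift r r' s k0 m0 d : bnd r -> bnd r' -> s [::] = false ->
  (forall k m, r' k m <= r k m) -> r' k0 m0 <= r k0 m0 - d ->
  rule_value P g r' s k0 m0 <= rule_value P g r s k0 m0 - d.
Proof.
move=> b b' hs hr h0; rewrite lerBrDr.
have cu' := tv_cvg r' s k0 m0 b'.
have -> : rule_value P g r' s k0 m0 + d = limn (fun n => tv r' s k0 m0 n [::] + d).
  rewrite /rule_value limD //; first by rewrite lim_cst.
  exact: is_cvg_cst.
apply: ler_lim; first by apply: is_cvgD => //; exact: is_cvg_cst.
  exact: tv_cvg.
exists 1%N => // -[//|n] _ /=; rewrite hs !addn0.
set A := g * _; set B := g * _.
have : A <= B by apply: ler_wpM2l => //; apply: comb_le (pmI _ _) _ _; exact: tv_mono.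
lra.
Qed.

Lemma tv_scale r s k0 m0 c n h :
  tv (fun k m => c * r k m) s k0 m0 n h = c * tv r s k0 m0 n h.
Proof.
elim: n h => [|n IH] h /=; first by rewrite mulr0.
case: (s h); first by rewrite mulr0.
by rewrite !IH; ring.
Qed.

Lemma rv_scale r s k0 m0 c : bnd r ->
  rule_value P g (fun k m => c * r k m) s k0 m0 = c * rule_value P g r s k0 m0.
Proof.
move=> b; rewrite /rule_value.
have -> : (fun n => tv (fun k m => c * r k m) s k0 m0 n [::]) =
          (fun n => c * tv r s k0 m0 n [::]) by apply/funext => n; exact: tv_scale.
rewrite limM //; [by rewrite lim_cst | exact: is_cvg_cst | exact: tv_cvg].
Qed.

Lemma st_false k0 m0 h : (k0 + count id (false :: h) = k0 + count id h)%N /\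
  (m0 + count negb (false :: h) = (m0 + count negb h).+1)%N.
Proof. by rewrite /= add0n add1n addnS. Qed.

Lemma tv_Zle r s k0 m0 : (forall k m, pmean P k m = 0 -> r k m <= 0) ->
  forall n h, pmean P (k0 + count id h)%N (m0 + count negb h)%N = 0 ->
  tv r s k0 m0 n h <= 0.
Proof.
move=> hr; elim=> [|n IH] h hz //=.
case: (s h) => //; rewrite hz mul0r add0r subr0 mul1r.
rewrite -[0]addr0; apply: lerD; first exact: hr.
apply: mulr_ge0_le0 => //; apply: IH.
by case: (st_false k0 m0 h) => -> ->; exact: pmean0S.
Qed.

Lemma tv_Zeq r s k0 m0 : (forall k m, pmean P k m = 0 -> r k m = 0) ->
  forall n h, pmean P (k0 + count id h)%N (m0 + count negb h)%N = 0 ->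
  tv r s k0 m0 n h = 0.
Proof.
move=> hr; elim=> [|n IH] h hz //=.
case: (s h) => //; rewrite hz mul0r add0r subr0 mul1r hr // add0r IH ?mulr0 //.
by case: (st_false k0 m0 h) => -> ->; exact: pmean0S.
Qed.

Definition cut s k0 m0 : stop_rule := fun h =>
  s h || (pmean P (k0 + count id h)%N (m0 + count negb h)%N == 0).

Lemma tv_cut r s k0 m0 : (forall k m, pmean P k m = 0 -> r k m = 0) ->
  forall n h, tv r s k0 m0 n h = tv r (cut s k0 m0) k0 m0 n h.
Proof.
move=> hr; elim=> [|n IH] h //.
case hs: (s h); first by rewrite !tvS /cut hs.
have [hz|hz] := eqVneq (pmean P (k0 + count id h)%N (m0 + count negb h)%N) 0.
  have -> : tv r (cut s k0 m0) k0 m0 n.+1 h = 0 by rewrite tvS /cut hs hz eqxx.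
  exact: tv_Zeq.
by rewrite !tvS /cut hs (negbTE hz) /= !IH.
Qed.

Lemma tv_agree r r' s k0 m0 :
  (forall k m, pmean P k m != 0 -> r k m = r' k m) ->
  forall n h, tv r (cut s k0 m0) k0 m0 n h = tv r' (cut s k0 m0) k0 m0 n h.
Proof.
move=> hr; elim=> [|n IH] h //.
rewrite tvS [RHS]tvS /cut; case: (s h) => //=.
have [hz|hz] := eqVneq (pmean P (k0 + count id h)%N (m0 + count negb h)%N) 0 => //=.
by rewrite !IH hr.
Qed.

Definition pi G : nat -> nat -> R := fun k m => pmean P k m - G.

Lemma bnd_pi G : bnd (pi G).
Proof.
exists (1 + `|G|); split; first by rewrite addr_ge0.
move=> k m; apply: le_trans (ler_normB _ _) _; rewrite lerD2r ger0_norm //.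
Qed.

Lemma rv_bound r s k m B : 0 <= B -> (forall k m, `|r k m| <= B) ->
  rule_value P g r s k m <= B / (1 - g).
Proof.
move=> B0 hB; have g1' : 0 < 1 - g by rewrite subr_gt0.
apply: rv_ub; first by exists B.
  by rewrite divr_ge0 // ltW.
move=> k' m'; have e : B / (1 - g) - g * (B / (1 - g)) = B.
  by rewrite -{1}(mul1r (B / _)) -mulrBl mulrC mulfVK // gt_eqF.
rewrite -lerBrDr e; exact: le_trans (ler_norm _) (hB k' m').
Qed.

Lemma hub_rv r (A : set stop_rule) k m : bnd r ->
  has_ubound [set rule_value P g r s k m | s in A].
Proof. move=> [B [B0 hB]]; exists (B / (1 - g)) => _ [s _ <-]; exact: rv_bound. Qed.

Lemma opt_play_ge G s k m : s [::] = false ->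
  rule_value P g (pi G) s k m <= opt_value_play P g (pi G) k m.
Proof. by move=> hs; apply: ub_le_sup; [exact: hub_rv (bnd_pi G) | exists s]. Qed.

Lemma opt_play_le G k m c : (forall s, s [::] = false -> rule_value P g (pi G) s k m <= c) ->
  opt_value_play P g (pi G) k m <= c.
Proof. by move=> h; apply: ge_sup; [exists (rule_value P g (pi G) s1 k m), s1 | move=> _ [s hs <-]; exact: h]. Qed.

Lemma rv0 s k m : rule_value P g (fun _ _ => 0) s k m = 0.
Proof.
have b : bnd (fun _ _ => 0 : R) by exists 0; split => // *; rewrite normr0.
apply/le_anti/andP; split; [apply: rv_ub | apply: rv_lb] => // *; by rewrite mulr0 addr0.
Qed.

Definition Tset k m := [set G : R | 0 <= opt_value_play P g (pi G) k m].

Lemma T_p k m : Tset k m (pmean P k m).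
Proof.
change (0 <= opt_value_play P g (pi (pmean P k m)) k m).
apply: le_trans (opt_play_ge _ s1 _ _ _) => //.
by rewrite rv_s1 /pi subrr.
Qed.

Lemma T_ub k m : ubound (Tset k m) 1.
Proof.
move=> G; rewrite /Tset /=; apply: contraTT; rewrite -!ltNge => G1.
apply: (@le_lt_trans _ _ (pmean P k m - G)); last by rewrite subr_lt0 (le_lt_trans (pm1 _ _)).
apply: opt_play_le => s hs.
have := @rv_shift (fun _ _ => 0) (pi G) s k m (G - pmean P k m).
rewrite rv0 sub0r opprB; apply => //.
- by exists 0; split => // *; rewrite normr0.
- exact: bnd_pi.
- by move=> k' m'; rewrite /pi subr_le0 ltW // (le_lt_trans (pm1 _ _)).
Qed.

Lemma hsT k m : has_sup (Tset k m).
Proof. by split; [exists (pmean P k m); exact: T_p | exists 1; exact: T_ub]. Qed.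

Lemma git_ge_p k m : pmean P k m <= gittins P g k m.
Proof. by apply: ub_le_sup; [case: (hsT k m) | exact: T_p]. Qed.

Lemma git_Z k m : pmean P k m = 0 -> gittins P g k m = 0.
Proof.
move=> hz; apply: sup_max; first by have := T_p k m; rewrite hz.
move=> G; rewrite /Tset /=; apply: contraTT; rewrite -!ltNge => G0.
apply: (@le_lt_trans _ _ (- G)); last by rewrite oppr_lt0.
apply: opt_play_le => s hs.
rewrite /rule_value; apply: limr_le; first exact: tv_cvg (bnd_pi G).
exists 1%N => // -[//|n] _ /=; rewrite hs !addn0 hz mul0r add0r subr0 mul1r /pi hz sub0r.
rewrite -[X in _ <= X]addr0 lerD2l; apply: mulr_ge0_le0 => //.
apply: tv_Zle => [k' m' ->|]; first by rewrite sub0r oppr_le0 ltW.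
by rewrite /= add0n addn0 add1n addn1; exact: pmean0S.
Qed.

Lemma stepA G G' k m : Tset k m G -> G' < G ->
  exists s, s [::] = false /\ 0 < rule_value P g (pi G') s k m.
Proof.
move=> TG GG.
set eps := (G - G') / 2.
have e0 : 0 < eps by rewrite divr_gt0 // subr_gt0.
have hs : has_sup [set rule_value P g (pi G) s k m | s in [set s : stop_rule | s [::] = false]].
  split; last exact: hub_rv (bnd_pi G).
  by exists (rule_value P g (pi G) s1 k m), s1.
have [_ [s hs0 <-] he] := sup_adherent e0 hs.
exists s; split => //.
have H : rule_value P g (pi G) s k m <= rule_value P g (pi G') s k m - (G - G').
  apply: rv_shift => //; try exact: bnd_pi.
    by move=> k' m'; rewrite /pi; lra.
  by rewrite /pi; lra.
move: TG he; rewrite /Tset /=; rewrite /opt_value_play => TG he.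
have : eps * 2 = G - G' by rewrite /eps mulfVK.
lra.
Qed.

Lemma stepB G k m : ~ Tset k m G -> forall s, s [::] = false ->
  rule_value P g (pi G) s k m < 0.
Proof.
move=> nT s hs; apply: le_lt_trans (opt_play_ge G s k m hs) _.
by rewrite ltNge; apply/negP.
Qed.

Lemma rv_ext r r' s s' k m : (forall n, tv r s k m n [::] = tv r' s' k m n [::]) ->
  rule_value P g r s k m = rule_value P g r' s' k m.
Proof.
move=> h; rewrite /rule_value.
by have -> : (fun n => tv r s k m n [::]) = (fun n => tv r' s' k m n [::]) by apply/funext.
Qed.

Lemma bnd_scale r c : bnd r -> bnd (fun k m => c * r k m).
Proof.
move=> [B [B0 hB]]; exists (`|c| * B); split; first by rewrite mulr_ge0.
by move=> k m; rewrite normrM ler_wpM2l.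
Qed.

Lemma zero_case v gb ga k m : pmean P k m = 0 ->
  eff_bid P v gb ga k m = v * gittins P g k m.
Proof.
move=> hz; rewrite git_Z // mulr0 /eff_bid /bid_click /bid_impr hz mul0r.
by rewrite min_r // mulr0 mul0r mul0r maxxx.
Qed.

Lemma case2 v k m : 0 < v -> 0 < pmean P k m ->
  eff_bid P v 0 g k m = v * gittins P g k m.
Proof.
move=> v0 p0; set p := pmean P k m; set q := gittins P g k m.
have pq : p <= q := git_ge_p k m.
have q0 : 0 < q := lt_le_trans p0 pq.
have c1 : Num.min 1 (p / q) = p / q by rewrite min_r // ler_pdivrMr // mul1r.
have c0 : 0 < p / q by rewrite divr_gt0.
have bi : bid_index P v 0 g k m = v * q.
  rewrite /bid_index; apply: sup_thr.
    move=> W hW /=; rewrite optv_g0 lt_max ltxx /= -/p -/q c1 subr_gt0.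
    by rewrite mulrCA [p * _]mulrC ltr_pM2r // ltr_pdivrMr.
  move=> W /=; rewrite optv_g0 lt_max ltxx /= -/p -/q c1 subr_gt0.
  by rewrite mulrCA [p * _]mulrC ltr_pM2r // ltr_pdivrMr // => /ltW.
rewrite /eff_bid /bid_click /bid_impr bi -/p -/q c1.
have e : v * q * (p / q) = v * p by field; rewrite gt_eqF.
rewrite e mulfK ?gt_eqF // max_r //.
by rewrite ler_pM2l.
Qed.

Lemma min11 : Num.min (1 : R) 1 = 1.
Proof. by rewrite min_l. Qed.

Lemma case1 v k m : 0 < v -> 0 < pmean P k m ->
  eff_bid P v g 0 k m = v * gittins P g k m.
Proof.
move=> v0 p0; set p := pmean P k m; set Gg := gittins P g k m.
have hq : forall k' m', gittins P 0 k' m' = pmean P k' m' := git_g0 P.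
pose rho W := fun k' m' => v * pmean P k' m' - W * Num.min 1 (pmean P k' m' / gittins P 0 k' m').
have rhoZ : forall W k' m', pmean P k' m' = 0 -> rho W k' m' = 0.
  by move=> W k' m' hz; rewrite /rho hq hz mulr0 mul0r min_r // mulr0 subr0.
have rhoNZ : forall W k' m', pmean P k' m' != 0 -> rho W k' m' = v * pi (W / v) k' m'.
  move=> W k' m' hz; rewrite /rho hq divff // min11 mulr1 /pi mulrBr.
  by rewrite [v * (W / v)]mulrC divfK ?gt_eqF.
have brho : forall W, bnd (rho W).
  move=> W; exists (v + `|W|); split; first by rewrite addr_ge0 // ltW.
  move=> k' m'; have [hz|hz] := eqVneq (pmean P k' m') 0.
    by rewrite rhoZ // normr0 addr_ge0 // ltW.
  rewrite rhoNZ // /pi mulrBr [v * (W / v)]mulrC divfK ?gt_eqF //.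
  apply: le_trans (ler_normB _ _) _; rewrite lerD2r normrM gtr0_norm //.
  by rewrite ger0_norm // ler_piMr // ltW.
have bi : bid_index P v g 0 k m = v * Gg.
  rewrite /bid_index; apply: sup_thr.
    move=> W hW /=; rewrite -/(rho W).
    have ub : forall s, rule_value P g (rho W) s k m <= opt_value P g (rho W) k m.
      by move=> s; apply: ub_le_sup; [exact: hub_rv | exists s].
    have [W0|W0] := ltP W 0.
      apply: lt_le_trans (ub s1) ; rewrite rv_s1 rhoNZ ?gt_eqF // -/p /pi pmulr_rgt0 // subr_gt0.
      by apply: (lt_trans _ p0); rewrite ltr_pdivrMr // mul0r.
    have hG' : W / v < Gg by rewrite ltr_pdivrMr // mulrC.
    have [G TG GG] := sup_gt (ex_intro _ _ (T_p k m)) hG'.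
    have [s [hs0 hs]] := @stepA G (W / v) k m TG GG.
    apply: lt_le_trans (ub s).
    apply: (@lt_le_trans _ _ (rule_value P g (fun k' m' => v * pi (W / v) k' m') s k m)).
      by rewrite rv_scale ?mulr_gt0 //; exact: bnd_pi.
    apply: rv_mono => //; first by apply: bnd_scale; exact: bnd_pi.
    move=> k' m'; have [hz|hz] := eqVneq (pmean P k' m') 0.
      rewrite rhoZ // /pi hz sub0r mulrN [v * (W / v)]mulrC divfK ?gt_eqF //.
      by rewrite oppr_le0.
    by rewrite rhoNZ.
  move=> W /=; rewrite -/(rho W); apply: contraTT; rewrite -!ltNge => hW.
  have hG' : Gg < W / v by rewrite ltr_pdivlMr // mulrC.
  have nT : ~ Tset k m (W / v).
    move=> TW; have := ub_le_sup (proj2 (hsT k m)) TW.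
    by rewrite leNgt hG'.
rewrite -leNgt.   apply: ge_sup; first by exists (rule_value P g (rho W) s1 k m), s1.
  move=> _ [s _ <-].
  case hs: (s [::]); first by rewrite rv_stop.
  rewrite (@rv_ext (rho W) (rho W) s (cut s k m)); last first.
    by move=> n; apply: tv_cut => k' m' hz; exact: rhoZ.
  rewrite (@rv_ext (rho W) (fun k' m' => v * pi (W / v) k' m') (cut s k m) (cut s k m)); last first.
    by move=> n; apply: tv_agree => k' m' hz; exact: rhoNZ.
  rewrite rv_scale; last exact: bnd_pi.
  rewrite ltW // pmulr_rlt0 //; apply: stepB => //.
  by rewrite /cut hs /= !addn0 gt_eqF.
rewrite /eff_bid /bid_click /bid_impr bi hq -/p divff ?gt_eqF // min11 mulr1.
by rewrite divfK ?gt_eqF // maxxx.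
Qed.
End Game.

Lemma one_bid (R : realType) (P : probability R R) (gamma gb ga v : R) k m :
  0 <= gamma < 1 -> 0 < v ->
  ((gb = gamma /\ ga = 0) \/ (gb = 0 /\ ga = gamma)) ->
  eff_bid P v gb ga k m = v * gittins P gamma k m.
Proof.
move=> /andP[g0 g1] v0 hc.
have pm0 := pmean_ge0 P; have pm1 := pmean_le1 P.
have [hz|hz] := eqVneq (pmean P k m) 0; first exact: zero_case.
have p0 : 0 < pmean P k m by rewrite lt_neqAle eq_sym hz pmean_ge0.
by case: hc => -[-> ->]; [exact: case1 | exact: case2].
Qed.

Theorem theorem5 (R : realType) (n : nat) (gamma gb ga : R)
  (Pr : 'I_n -> probability R R) (v : 'I_n -> R) (k m : 'I_n -> nat) :
  0 <= gamma < 1 ->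
  (forall j, Pr j (~` `[0, 1]) = 0%E) ->
  (forall j, 0 < v j) ->
  (forall j, 0 < mom (Pr j) (k j) (m j)) ->
  ((gb = gamma /\ ga = 0) \/ (gb = 0 /\ ga = gamma)) ->
  (forall j, eff_bid (Pr j) (v j) gb ga (k j) (m j)
             = v j * gittins (Pr j) gamma (k j) (m j)) /\
  (forall j, (forall i, eff_bid (Pr i) (v i) gb ga (k i) (m i)
                        <= eff_bid (Pr j) (v j) gb ga (k j) (m j)) <->
             (forall i, v i * gittins (Pr i) gamma (k i) (m i)
                        <= v j * gittins (Pr j) gamma (k j) (m j))).
Proof.
move=> hg _ hv _ hc.
have E : forall j, eff_bid (Pr j) (v j) gb ga (k j) (m j)
             = v j * gittins (Pr j) gamma (k j) (m j).
  by move=> j; apply: one_bid.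
split => // j; split => h i; [rewrite -!E | rewrite !E]; exact: h.
Qed.
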